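(* Assume the setting below, and assume additionally: (i) there is a constant $\Lambda\ge0$ with $\overline{L}^{(m)}_n\le\Lambda$ for all $m\ge m_0$ and $n\ge0$; (ii) the computed orbits are valid, i.e. $|\hat{x}^{(m)}_n-x_n|\le\overline{e}^{(m)}_n$ for all $m\ge m_0$ and $n\ge0$; (iii) $\overline{L}^{(m)}_n\ge\sup\{|f'(z)|: z\in[\hat{x}^{(m)}_n-\overline{e}^{(m)}_n,\hat{x}^{(m)}_n+\overline{e}^{(m)}_n]\cap\operatorname{int}D\}$ for all $m\ge m_0$, $n\ge0$; (iv) $x_n\in\operatorname{int}D$ for all $n\ge0$ and the Ljapunow exponent $\lambda(x_0)$ exists as a real number. Then for every $p\in\mathbb{Z}$, $$\sigma(x_0,p)\ge\frac{\lambda(x_0)}{\ln 2}.$$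
   Context: Setting. $D\subset\mathbb{R}$ is a compact interval with $0\notin D$, and $f:D\to D$ is continuous on $D$, continuously differentiable on $\operatorname{int}D$, with $f'$ bounded on $\operatorname{int}D$. Fix $K>0$ and an integer $m_0\ge1$ with $K2^{-m_0}<1$, and put $\delta_m:=\frac{K2^{-m}}{1-K2^{-m}}$ for integers $m\ge m_0$. Fix an initial value $x_0\in D$ and let $x_n:=f^n(x_0)$. For each integer $m\ge m_0$ (the mantissa length) a computed orbit is given: sequences $(\hat{x}^{(m)}_n)_{n\ge0}\subset D$, $(\overline{e}^{(m)}_n)_{n\ge0}$ and numbers $\overline{L}^{(m)}_n\ge0$ with $\overline{e}^{(m)}_0=\delta_m|\hat{x}^{(m)}_0|$ and $\overline{e}^{(m)}_{n+1}=\overline{L}^{(m)}_n\overline{e}^{(m)}_n+\delta_m|\hat{x}^{(m)}_{n+1}|$. For $N\in\mathbb{N}$ and $p\in\mathbb{Z}$, the minimal mantissa length $m_{min}(x_0,N,p)$ is the least integer $m\ge m_0$ such that $\overline{e}^{(m)}_n\le\frac{10^{-p}}{1+10^{-p}}|\hat{x}^{(m)}_n|$ for all $n=0,\dots,N$. The loss of significance rate is $\sigma(x_0,p):=\limsup_{N\to\infty}m_{min}(x_0,N,p)/N$. The Ljapunow exponent at $x$ (for $x$ whose orbit stays in $\operatorname{int}D$) is $\lambda(x):=\lim_{n\to\infty}\frac1n\sum_{k=0}^{n-1}\ln|f'(f^k(x))|$ when this limit exists. *)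

(* Defs.v *)
From Stdlib Require Import Reals Lra Lia ZArith Classical ClassicalEpsilon.
Open Scope R_scope.

Definition orbit (f : R -> R) (x0 : R) (n : nat) : R := Nat.iter n f x0.

Fixpoint psum (g : nat -> R) (n : nat) : R :=
  match n with
  | O => 0
  | S k => psum g k + g k
  end.

Definition delta (K : R) (m : nat) : R :=
  K * (/2) ^ m / (1 - K * (/2) ^ m).

(* accuracy condition for mantissa length m up to step N, precision p *)
Definition good (xhat ebar : nat -> nat -> R) (p : Z) (N m : nat) : Prop :=
  forall n : nat, (n <= N)%nat ->
    ebar m n <= powerRZ 10 (- p) / (1 + powerRZ 10 (- p)) * Rabs (xhat m n).

Definition is_mmin (m0 : nat) (xhat ebar : nat -> nat -> R) (p : Z) (N m : nat) : Prop :=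
  (m0 <= m)%nat /\ good xhat ebar p N m /\
  (forall m' : nat, (m0 <= m')%nat -> (m' < m)%nat -> ~ good xhat ebar p N m').

(* minimal mantissa length m_min(x0,N,p) (chosen via Hilbert epsilon; it is
   the unique least element whenever one exists) *)
Definition m_min (m0 : nat) (xhat ebar : nat -> nat -> R) (p : Z) (N : nat) : nat :=
  epsilon (inhabits 0%nat) (is_mmin m0 xhat ebar p N).

(* limsup_{N -> oo} u N >= c  (limsup taken in the extended reals) *)
Definition limsup_ge (u : nat -> R) (c : R) : Prop :=
  forall eps : R, eps > 0 -> forall N0 : nat, exists N : nat, (N >= N0)%nat /\ u N >= c - eps.

Definition sigma_ge (m0 : nat) (xhat ebar : nat -> nat -> R) (p : Z) (c : R) : Prop :=
  limsup_ge (fun N => INR (m_min m0 xhat ebar p N) / INR N) c.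

(* Main.v *)
Require Import Defs.
From Stdlib Require Import Reals ZArith Lra Lia Classical ClassicalEpsilon.
Open Scope R_scope.



Lemma ln_le' x y : 0 < x -> x <= y -> ln x <= ln y.
Proof. intros Hx Hxy. destruct Hxy as [H|H]. left; apply ln_increasing; auto. subst; lra. Qed.

Lemma least_ex (P : nat -> Prop) n : P n -> exists m, P m /\ forall k, (k < m)%nat -> ~ P k.
Proof.
  induction n as [n IH] using (well_founded_induction lt_wf). intros Pn.
  destruct (classic (exists k, (k < n)%nat /\ P k)) as [[k [Hk Pk]]|H'].
  - exact (IH k Hk Pk).
  - exists n; split; auto. intros k Hk Pk; apply H'; eauto.
Qed.

Lemma absbounds a b x : a <= b -> ~ (a <= 0 <= b) -> a <= x <= b ->
  0 < Rmin (Rabs a) (Rabs b) /\ Rmin (Rabs a) (Rabs b) <= Rabs x <= Rmax (Rabs a) (Rabs b).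
Proof.
  intros Hab H0 Hx.
  destruct (Rlt_dec 0 a) as [Ha|Ha].
  - rewrite !Rabs_right by lra. unfold Rmin, Rmax; destruct Rle_dec; lra.
  - assert (b < 0) by lra. rewrite !Rabs_left by lra. unfold Rmin, Rmax; destruct Rle_dec; lra.
Qed.

Lemma halfpow_mono m0 m : (m0 <= m)%nat -> (/2)^m <= (/2)^m0.
Proof.
  intros H. rewrite !pow_inv. apply Rinv_le_contravar. apply pow_lt; lra.
  apply Rle_pow; auto; lra.
Qed.

Theorem mainTheorem7
  (a b : R) (f fp : R -> R) (K : R) (m0 : nat) (x0 : R)
  (xhat ebar Lbar : nat -> nat -> R)
  (* D = [a,b] compact interval, 0 not in D *)
  (Hab : a <= b) (H0D : ~ (a <= 0 <= b))
  (* f : D -> D, continuous on D *)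
  (HfD : forall x, a <= x <= b -> a <= f x <= b)
  (Hfcont : forall x, a <= x <= b -> limit1_in f (fun y => a <= y <= b) (f x) x)
  (* f is C^1 on int D with derivative fp, fp bounded on int D *)
  (Hfder : forall x, a < x < b -> derivable_pt_lim f x (fp x))
  (Hfpcont : forall x, a < x < b -> continuity_pt fp x)
  (Hfpbd : exists B : R, forall x, a < x < b -> Rabs (fp x) <= B)
  (* constants *)
  (HK : K > 0) (Hm0 : (1 <= m0)%nat) (HKm0 : K * (/2) ^ m0 < 1)
  (Hx0 : a <= x0 <= b)
  (* computed orbits *)
  (Hxhat : forall m n, (m0 <= m)%nat -> a <= xhat m n <= b)
  (HL0 : forall m n, (m0 <= m)%nat -> Lbar m n >= 0)
  (He0 : forall m, (m0 <= m)%nat -> ebar m 0%nat = delta K m * Rabs (xhat m 0%nat))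
  (HeS : forall m n, (m0 <= m)%nat ->
     ebar m (S n) = Lbar m n * ebar m n + delta K m * Rabs (xhat m (S n)))
  (* (i) *)
  (Hi : exists Lam : R, Lam >= 0 /\ forall m n, (m0 <= m)%nat -> Lbar m n <= Lam)
  (* (ii) *)
  (Hii : forall m n, (m0 <= m)%nat -> Rabs (xhat m n - orbit f x0 n) <= ebar m n)
  (* (iii) *)
  (Hiii : forall m n z, (m0 <= m)%nat ->
     xhat m n - ebar m n <= z <= xhat m n + ebar m n -> a < z < b ->
     Rabs (fp z) <= Lbar m n)
  (* (iv) *)
  (Hiv : forall n, a < orbit f x0 n < b)
  (Hfp0 : forall n, fp (orbit f x0 n) <> 0)
  (lam : R)
  (Hlam : Un_cv (fun n => / INR n * psum (fun k => ln (Rabs (fp (orbit f x0 k)))) n) lam) :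
  forall p : Z, sigma_ge m0 xhat ebar p (lam / ln 2).
Proof.
  intros p eps Heps N0.
  destruct Hi as [Lam [HLam HLb]].
  set (c := powerRZ 10 (- p) / (1 + powerRZ 10 (- p))).
  assert (Hc : 0 < c).
  { unfold c. assert (0 < powerRZ 10 (-p)) by (apply powerRZ_lt; lra).
    apply Rdiv_lt_0_compat; lra. }
  set (d := Rmin (Rabs a) (Rabs b)).
  set (Bm := Rmax (Rabs a) (Rabs b)).
  assert (Hd : 0 < d) by (apply (absbounds a b a); auto; lra).
  assert (Hxb : forall m n, (m0 <= m)%nat -> d <= Rabs (xhat m n) <= Bm).
  { intros m n Hm. apply (absbounds a b); auto. }
  assert (HBd : d <= Bm) by (unfold d, Bm, Rmin, Rmax; destruct Rle_dec; lra).
  set (q := fun m : nat => (/2)^m).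
  assert (Hq : forall m, (m0 <= m)%nat -> 0 < q m <= q m0).
  { intros m Hm; split. apply pow_lt; lra. apply halfpow_mono; auto. }
  assert (Hdel : forall m, (m0 <= m)%nat ->
     K * q m <= delta K m <= K * q m / (1 - K * q m0)).
  { intros m Hm. destruct (Hq m Hm) as [H1 H2]. unfold delta. fold (q m).
    assert (K * q m <= K * q m0) by (apply Rmult_le_compat_l; lra).
    assert (0 < K * q m) by (apply Rmult_lt_0_compat; lra).
    fold (q m0) in HKm0.
    split.
    - apply (Rmult_le_reg_r (1 - K * q m)). lra. field_simplify; try lra. nra.
    - unfold Rdiv. apply Rmult_le_compat_l. lra. apply Rinv_le_contravar; lra. }
  set (g := fun k => ln (Rabs (fp (orbit f x0 k)))).
  assert (Hlow : forall m n, (m0 <= m)%nat -> delta K m * d * exp (psum g n) <= ebar m n).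
  { intros m n Hm. destruct (Hdel m Hm) as [D1 _]. destruct (Hq m Hm) as [Q1 _].
    assert (0 < delta K m) by (assert (0 < K * q m) by (apply Rmult_lt_0_compat; lra); lra).
    induction n as [|n IH].
    - rewrite He0 by auto. simpl. rewrite exp_0. destruct (Hxb m 0%nat Hm). nra.
    - rewrite HeS by auto. simpl psum. rewrite exp_plus. unfold g at 2.
      rewrite exp_ln by (apply Rabs_pos_lt; auto).
      assert (HL : Rabs (fp (orbit f x0 n)) <= Lbar m n).
      { apply Hiii; auto. specialize (Hii m n Hm). unfold Rabs in Hii.
        destruct Rcase_abs in Hii; lra. }
      assert (0 <= exp (psum g n)) by (left; apply exp_pos).
      assert (0 <= delta K m * Rabs (xhat m (S n))) by (apply Rmult_le_pos; [lra|apply Rabs_pos]).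
      assert (0 <= delta K m * d * exp (psum g n)) by (apply Rmult_le_pos; [nra|lra]).
      assert (0 <= Rabs (fp (orbit f x0 n))) by apply Rabs_pos.
      nra. }
  assert (Hup : forall m n, (m0 <= m)%nat ->
     ebar m n <= delta K m * Bm * (INR n + 1) * (1 + Lam)^n).
  { intros m n Hm. destruct (Hdel m Hm) as [D1 _]. destruct (Hq m Hm) as [Q1 _].
    assert (0 < delta K m) by (assert (0 < K * q m) by (apply Rmult_lt_0_compat; lra); lra).
    induction n as [|n IH].
    - rewrite He0 by auto. simpl. destruct (Hxb m 0%nat Hm). replace (delta K m * Bm * (0 + 1) * 1) with (delta K m * Bm) by ring. apply Rmult_le_compat_l; lra.
    - rewrite HeS by auto. rewrite S_INR. simpl pow.
      set (P := (1 + Lam)^n) in *.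
      assert (HP : 1 <= P) by (unfold P; apply pow_R1_Rle; lra).
      set (u := delta K m * Bm).
      assert (Hu : 0 <= u) by (unfold u; apply Rmult_le_pos; lra).
      assert (0 <= INR n) by apply pos_INR.
      assert (He : 0 <= ebar m n).
      { specialize (Hlow m n Hm). assert (0 < exp (psum g n)) by apply exp_pos.
        assert (0 <= delta K m * d * exp (psum g n)) by (apply Rmult_le_pos; nra). lra. }
      assert (H1 : Lbar m n * ebar m n <= Lam * (u * (INR n + 1) * P)).
      { specialize (HL0 m n Hm). specialize (HLb m n Hm). unfold u. apply Rmult_le_compat; lra. }
      assert (H2 : delta K m * Rabs (xhat m (S n)) <= u).
      { unfold u. destruct (Hxb m (S n) Hm). apply Rmult_le_compat_l; lra. }
      fold u.
      assert (0 <= u * (INR n + 1) * P) by (apply Rmult_le_pos; [apply Rmult_le_pos|]; lra).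
      assert (u <= u * P) by nra.
      assert (0 <= Lam * (u * P)) by (apply Rmult_le_pos; nra).
      assert (u * (INR n + 1 + 1) * ((1 + Lam) * P) =
        u * (INR n + 1) * P + Lam * (u * (INR n + 1) * P) + u * P + Lam * (u * P)) by ring.
      lra. }
  assert (Hex : forall N, exists m, is_mmin m0 xhat ebar p N m).
  { intros N.
    set (F := Bm * (INR N + 1) * (1 + Lam)^N).
    assert (HF : 0 < F).
    { unfold F. apply Rmult_lt_0_compat. apply Rmult_lt_0_compat. lra.
      assert (0 <= INR N) by apply pos_INR. lra. apply pow_lt; lra. }
    assert (Hq0 : 0 < 1 - K * q m0) by (unfold q; lra).
    destruct (pow_lt_1_zero (/2) ltac:(rewrite Rabs_right; lra) (c * d * (1 - K * q m0) / (K * F)))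
      as [M HM].
    { apply Rdiv_lt_0_compat. apply Rmult_lt_0_compat; [nra|lra]. nra. }
    destruct (least_ex (fun m => (m0 <= m)%nat /\ good xhat ebar p N m) (M + m0)) as [m [[Hm1 Hm2] Hm3]].
    - split. lia. intros n Hn.
      assert (Hmm : (m0 <= M + m0)%nat) by lia.
      specialize (HM (M + m0)%nat ltac:(lia)). rewrite Rabs_right in HM by (left; apply pow_lt; lra).
      fold (q (M + m0)%nat) in HM.
      destruct (Hdel _ Hmm) as [D1 D2]. destruct (Hxb (M+m0)%nat n Hmm).
      destruct (Hq _ Hmm).
      fold c.
      apply Rle_trans with (delta K (M + m0) * F).
      + apply Rle_trans with (1 := Hup _ n Hmm). unfold F.
        rewrite !Rmult_assoc. apply Rmult_le_compat_l. assert (0 < K * q (M + m0)%nat) by nra. lra.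
        apply Rmult_le_compat_l. lra.
        assert (INR n <= INR N) by (apply le_INR; auto).
        assert (1 <= (1 + Lam)^n) by (apply pow_R1_Rle; lra).
        assert ((1 + Lam)^n <= (1 + Lam)^N) by (apply Rle_pow; auto; lra).
        assert (0 <= INR n) by apply pos_INR.
        apply Rmult_le_compat; lra.
      + apply Rle_trans with (K * q (M + m0)%nat / (1 - K * q m0) * F).
        apply Rmult_le_compat_r; lra.
        apply Rle_trans with (c * d). 2: apply Rmult_le_compat_l; lra.
        apply (Rmult_lt_compat_l (K * F)) in HM; [|nra].
        unfold Rdiv in *. 
        replace (K * F * (c * d * (1 - K * q m0) * / (K * F))) with (c * d * (1 - K * q m0)) in HM by (field; nra).
        apply (Rmult_le_reg_r (1 - K * q m0)). lra.
        replace (K * q (M + m0)%nat * / (1 - K * q m0) * F * (1 - K * q m0)) with (K * F * q (M + m0)%nat) by (field; lra).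
        lra.
    - exists m. split; auto. split; auto. intros m' H1 H2 H3. apply (Hm3 m' H2). auto. }
  assert (Hspec : forall N, is_mmin m0 xhat ebar p N (m_min m0 xhat ebar p N)).
  { intros N. unfold m_min. apply epsilon_spec. auto. }
  set (C0 := ln K + ln d - ln (c * Bm)).
  assert (Hkey : forall N, INR (m_min m0 xhat ebar p N) * ln 2 >= psum g N + C0).
  { intros N. destruct (Hspec N) as [Hm [Hg _]]. set (m := m_min m0 xhat ebar p N) in *.
    specialize (Hg N (Nat.le_refl N)). specialize (Hlow m N Hm).
    destruct (Hdel m Hm) as [D1 _]. destruct (Hxb m N Hm). destruct (Hq m Hm).
    fold c in Hg.
    assert (Hin : K * q m * d * exp (psum g N) <= c * Bm).
    { assert (0 < exp (psum g N)) by apply exp_pos.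
      apply Rle_trans with (delta K m * d * exp (psum g N)).
      apply Rmult_le_compat_r; [lra|]. apply Rmult_le_compat_r; lra.
      apply Rle_trans with (1 := Hlow). apply Rle_trans with (1 := Hg).
      apply Rmult_le_compat_l; lra. }
    assert (0 < exp (psum g N)) by apply exp_pos.
    apply ln_le' in Hin; [| repeat apply Rmult_lt_0_compat; lra].
    rewrite !ln_mult in Hin by (repeat apply Rmult_lt_0_compat; lra).
    rewrite ln_exp in Hin. unfold q in Hin. rewrite ln_pow in Hin by lra.
    rewrite ln_Rinv in Hin by lra. unfold C0. lra. }
  assert (Hl2 : 0 < ln 2) by (pose proof ln_lt_2; lra).
  destruct (Hlam (eps * ln 2 / 2) ltac:(apply Rdiv_lt_0_compat; [nra|lra])) as [N1 HN1].
  destruct (INR_unbounded (-2 * C0 / (eps * ln 2))) as [N2 HN2].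
  set (N := (N0 + N1 + N2 + 1)%nat).
  exists N. split. unfold N; lia.
  set (n := INR N).
  assert (Hn2 : INR N2 <= n) by (apply le_INR; unfold N; lia).
  assert (Hn : 0 < n) by (unfold n, N; apply lt_0_INR; lia).
  specialize (HN1 N ltac:(unfold N; lia)). unfold R_dist in HN1. fold n in HN1.
  specialize (Hkey N). set (m := INR (m_min m0 xhat ebar p N)) in *.
  set (S := psum g N) in *.
  assert (HS : n * lam - n * (eps * ln 2 / 2) <= S).
  { change (psum (fun k : nat => ln (Rabs (fp (orbit f x0 k)))) N) with S in HN1. destruct (Rcase_abs (/ n * S - lam)) as [Hr|Hr]; [rewrite (Rabs_left (/ n * S - lam)) in HN1 by lra | rewrite (Rabs_right (/ n * S - lam)) in HN1 by lra].
    - apply (Rmult_lt_compat_l n) in HN1; auto.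
      replace (n * (- (/ n * S - lam))) with (n * lam - S) in HN1 by (field; lra). lra.
    - assert (/ n * S >= lam) by lra.
      assert (n * (/ n * S) >= n * lam) by nra.
      replace (n * (/ n * S)) with S in * by (field; lra).
      assert (0 <= n * (eps * ln 2 / 2)) by (apply Rmult_le_pos; [lra|]; left; apply Rdiv_lt_0_compat; [nra|lra]).
      lra. }
  assert (HC : -2 * C0 < n * (eps * ln 2)).
  { assert (-2 * C0 / (eps * ln 2) < n) by lra.
    apply (Rmult_lt_compat_r (eps * ln 2)) in H; [|nra].
    unfold Rdiv in H. rewrite Rmult_assoc, Rinv_l in H by nra. lra. }
  set (y := lam / ln 2 - eps).
  assert (Hly : lam = (y + eps) * ln 2) by (unfold y; field; lra).
  assert (Hmy : n * y <= m).
  { apply (Rmult_le_reg_r (ln 2)); auto. rewrite Hly in HS. nra. }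
  apply Rle_ge. apply (Rmult_le_reg_r n); auto. unfold Rdiv. rewrite Rmult_assoc, Rinv_l by lra. lra.
Qed.
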